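(* For every positive integer $\ell$, there exist integers $p_1,\dots,p_\ell$ with $j\le p_j\le j(j+1)$ for all $1\le j\le\ell$ such that the $\ell\times\ell$ matrix $A(\{p_j\}_{j=1}^\ell)$ with entries $A_{ij}=C_{p_j}(i)$, $i,j\in[\ell]$, is invertible.
   Context: For a positive integer $p$ and $y\ge0$, $C_p(y)=p\,(1-(1-1/p)^y)$. *)

(* Defs.v *)
From mathcomp Require Import all_boot all_order all_algebra.
Set Implicit Arguments. Unset Strict Implicit. Unset Printing Implicit Defensive.
Import Order.TTheory GRing.Theory Num.Theory.
Local Open Scope ring_scope.

(* C_p(y) = p (1 - (1 - 1/p)^y), for p a positive integer and y a natural
   number (only integer arguments y = i are needed); values are rational. *)
Definition Cp (p y : nat) : rat := p%:R * (1 - (1 - p%:R^-1) ^+ y).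

(* The l x l matrix A({p_j}) with A_{ij} = C_{p_j}(i), i, j in [l];
   row/column index k : 'I_l stands for k+1. *)
Definition Amat (l : nat) (p : 'I_l -> nat) : 'M[rat]_l :=
  \matrix_(i < l, j < l) Cp (p j) i.+1.

(* Main.v *)
Require Import Defs.
From mathcomp Require Import all_boot all_order all_algebra.
Set Implicit Arguments. Unset Strict Implicit. Unset Printing Implicit Defensive.
Import Order.TTheory GRing.Theory Num.Theory.
Local Open Scope ring_scope.

Lemma Cp_sum (p n : nat) : (0 < p)%N ->
  Cp p n = \sum_(k < n) (1 - p%:R^-1 : rat) ^+ k.
Proof.
move=> p0; rewrite /Cp.
have hp : (p%:R : rat) != 0 by rewrite pnatr_eq0 -lt0n.
have -> : 1 - (1 - p%:R^-1) ^+ n = - ((1 - p%:R^-1 : rat) ^+ n - 1) by rewrite opprB.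
rewrite subrX1 addrAC subrr add0r mulNr opprK mulrA mulrV ?mul1r // unitfE.

Qed.

Theorem lemma8 (l : nat) : (0 < l)%N ->
  exists p : 'I_l -> nat,
    (forall j : 'I_l, (j.+1 <= p j <= j.+1 * j.+2)%N) /\
    Amat p \in unitmx.
Proof.
move=> _; exists (fun j : 'I_l => j.+1); split.
  by move=> j; rewrite leqnn /= leq_pmulr.
pose a : 'rV[rat]_l := \row_j (1 - (j.+1)%:R^-1).
pose L : 'M[rat]_l := \matrix_(i, k) ((k <= i)%N)%:R.
have EA : Amat (fun j : 'I_l => j.+1) = L *m Vandermonde l a.
  apply/matrixP => i j; rewrite !mxE Cp_sum //.
  rewrite (big_ord_widen l (fun k => (1 - (j.+1)%:R^-1 : rat) ^+ k)) //.
  rewrite big_mkcond /=; apply: eq_bigr => k _.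
  rewrite !mxE ltnS; case: (k <= i)%N; by rewrite ?mul1r ?mul0r.
rewrite EA unitmxE det_mulmx unitfE mulf_neq0 //.
  rewrite det_trig.
    by apply/prodf_neq0 => i _; rewrite mxE leqnn oner_eq0.
  apply/forallP => i; apply/forallP => k; apply/implyP => hik.
  by rewrite mxE leqNgt hik.
rewrite det_Vandermonde; apply/prodf_neq0 => i _; apply/prodf_neq0 => k hik.
rewrite !mxE subr_eq0; apply/negP => /eqP /(congr1 (fun z => 1 - z)).
rewrite !opprB !addrA !(addrC 1) !addrK => /invr_inj /eqP.
rewrite eqr_nat eqSS => /eqP hk.
by move: hik; rewrite hk ltnn.
Qed.
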